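(* Let $\mathfrak M$ be a relational structure with domain $\Sigma$. For every $n\ge1$ and every relation $R\subseteq(\Sigma^* )^n$, $R$ is $MSO(\mathfrak M)$-definable if and only if the relation $\mu(R)=\{(\mu(w_1),\dots,\mu(w_n)):(w_1,\dots,w_n)\in R\}$ admits a reduction sequence with respect to $\mathfrak M_\#$ and $\mathfrak S_{<\omega}$.
   Context: Let $\mathfrak L$ be a relational language and $\mathfrak M$ an $\mathfrak L$-structure with domain $\Sigma$. Let $\#\notin\Sigma$ and let $\mathfrak M_\#$ be the $\mathfrak L_\#=\mathfrak L\cup\{P_\#\}$-structure with domain $\Sigma\cup\{\#\}$, every symbol of $\mathfrak L$ interpreted as in $\mathfrak M$ and $P_\#(x)$ holding iff $x=\#$. $MSO(\mathfrak M)$-definability: for $w=(w_1,\dots,w_n)\in(\Sigma^* )^n$, $\langle w\rangle$ is the word over $(\Sigma\cup\{\#\})^n$ of length $\max_i|w_i|$ obtained by right-padding each $w_i$ with $\#$'s and reading them in parallel; $\pi_j(\langle w\rangle)$ is its $j$-th component and $u[i]$ the $i$-th letter of $u$ (from $0$). To each first-order $\mathfrak L_\#$-formula $F$ with at least one free variable associate a unary predicate $\alpha_F$; $MSO(\mathfrak L)$ is monadic second-order logic over $\{<\}\cup\{\alpha_F\}$. $R$ is $MSO(\mathfrak M)$-definable if there is an $MSO(\mathfrak L)$-sentence $\psi$ such that $w\in R$ iff $\psi$ holds in the structure with domain $D=\{0,\dots,|\langle w\rangle|-1\}$, natural order $<$, and, for each $F$ with $n$ free variables, $\alpha_F(x)$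 true iff $\mathfrak M_\#\models F(\pi_1(\langle w\rangle)[x],\dots,\pi_n(\langle w\rangle)[x])$. Weak power setting: let $W$ be the set of sequences $f:\omega\to\Sigma\cup\{\#\}$ with $f(i)\ne\#$ for only finitely many $i$. For $w\in\Sigma^*$, $\mu(w)\in W$ is the sequence $w\#^\omega$. $\mathfrak S_{<\omega}=(S^+(\omega);\subseteq,\ll)$ where $S^+(\omega)$ is the set of finite subsets of $\omega$, $\subseteq$ is inclusion, and $X\ll Y$ iff $X=\{m\}$, $Y=\{k\}$ with $m<k$. A relation $P\subseteq W^n$ admits a reduction sequence with respect to $\mathfrak M_\#$ and $\mathfrak S_{<\omega}$ if there are a first-order formula $G(X_1,\dots,X_l)$ in the language $\{\subseteq,\ll\}$ and first-order $\mathfrak L_\#$-formulas $\theta_1,\dots,\theta_l$ with $n$ free variables, such that $\mathfrak M_\#\models\neg\theta_i(\#,\dots,\#)$ for every $i$, and for every $(f_1,\dots,f_n)\in W^n$: $(f_1,\dots,f_n)\in P$ iff $\mathfrak S_{<\omega}\models G(T_1,\dots,T_l)$ where $T_i=\{x\in\omega:\mathfrak M_\#\models\theta_i(f_1(x),\dots,f_n(x))\}$. *)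

(* Defs.v *)
From Stdlib Require Import List Arith Lia.
Import ListNotations.
Set Implicit Arguments.

Definition scons {A : Type} (a : A) (e : nat -> A) : nat -> A :=
  fun i => match i with 0 => a | S k => e k end.

(* First-order formulas of L_# = L ∪ {P_#} (with equality),           *)
(* de Bruijn variables.  The domain of M_# is option Sigma,            *)
(* None playing the role of the new symbol #.                          *)
Section HashLogic.
Variable Sym : Type.
Variable ar : Sym -> nat.
Variable Sigma : Type.
Variable rel : Sym -> list Sigma -> Prop.

Inductive hform : Type :=
| HRel (s : Sym) (args : list nat)
| HHash (v : nat)
| HEq (u v : nat)
| HNot (f : hform)
| HAnd (f g : hform)
| HEx (f : hform).

(* 1 + largest free variable index (0 if none) *)
Fixpoint hfvb (f : hform) : nat :=
  match f with
  | HRel _ args => fold_right (fun v m => max (S v) m) 0 args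
  | HHash v => S v
  | HEq u v => max (S u) (S v)
  | HNot g => hfvb g
  | HAnd g h => max (hfvb g) (hfvb h)
  | HEx g => pred (hfvb g)
  end.

(* Satisfaction in M_#: symbols of L hold only on tuples of elements of
   Sigma (never on tuples involving #), as in M; P_#(x) iff x = #. *)
Fixpoint hsat (e : nat -> option Sigma) (f : hform) : Prop :=
  match f with
  | HRel s args => length args = ar s /\
      exists ws, map e args = map (@Some Sigma) ws /\ rel s ws
  | HHash v => e v = None
  | HEq u v => e u = e v
  | HNot g => ~ hsat e g
  | HAnd g h => hsat e g /\ hsat e h
  | HEx g => exists a, hsat (scons a e) g
  end.

(* Two separate de Bruijn sorts: position variables and set variables. *)
Inductive mso : Type :=
| MLt (x y : nat)
| MEq (x y : nat)
| MIn (x X : nat)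
| MAlpha (F : hform) (x : nat)
| MNot (f : mso)
| MAnd (f g : mso)
| MEx1 (f : mso)
| MEx2 (f : mso).

Fixpoint mfv1 (f : mso) : nat :=
  match f with
  | MLt x y | MEq x y => max (S x) (S y)
  | MIn x _ => S x
  | MAlpha _ x => S x
  | MNot g => mfv1 g
  | MAnd g h => max (mfv1 g) (mfv1 h)
  | MEx1 g => pred (mfv1 g)
  | MEx2 g => mfv1 g
  end.

Fixpoint mfv2 (f : mso) : nat :=
  match f with
  | MLt _ _ | MEq _ _ | MAlpha _ _ => 0
  | MIn _ X => S X
  | MNot g => mfv2 g
  | MAnd g h => max (mfv2 g) (mfv2 h)
  | MEx1 g => mfv2 g
  | MEx2 g => pred (mfv2 g)
  end.

Fixpoint mso_wf (n : nat) (f : mso) : Prop :=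
  match f with
  | MAlpha F _ => 0 < hfvb F <= n
  | MLt _ _ | MEq _ _ | MIn _ _ => True
  | MNot g => mso_wf n g
  | MAnd g h => mso_wf n g /\ mso_wf n h
  | MEx1 g | MEx2 g => mso_wf n g
  end.

Definition conv_len (w : list (list Sigma)) : nat :=
  fold_right (fun u m => max (length u) m) 0 w.

(* pi_{i+1}(<w>)[x] : the x-th letter of w_{i+1}, or # after its end *)
Definition conv_letter (w : list (list Sigma)) (i x : nat) : option Sigma :=
  match nth_error w i with
  | Some wi => nth_error wi x
  | None => None
  end.

Fixpoint msat (w : list (list Sigma)) (e1 : nat -> nat) (e2 : nat -> nat -> Prop)
  (f : mso) : Prop :=
  match f with
  | MLt x y => e1 x < e1 y
  | MEq x y => e1 x = e1 y
  | MIn x X => e2 X (e1 x)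
  | MAlpha F x => hsat (fun i => conv_letter w i (e1 x)) F
  | MNot g => ~ msat w e1 e2 g
  | MAnd g h => msat w e1 e2 g /\ msat w e1 e2 h
  | MEx1 g => exists p, p < conv_len w /\ msat w (scons p e1) e2 g
  | MEx2 g => exists X : nat -> Prop, (forall p, X p -> p < conv_len w) /\
                msat w e1 (scons X e2) g
  end.

Definition MSO_definable (n : nat) (R : list (list Sigma) -> Prop) : Prop :=
  exists psi : mso, mso_wf n psi /\ mfv1 psi = 0 /\ mfv2 psi = 0 /\
    forall w, length w = n ->
      (R w <-> msat w (fun _ => 0) (fun _ _ => False) psi).

Definition in_W (f : nat -> option Sigma) : Prop :=
  exists m, forall i, m <= i -> f i = None.

(* mu(w) = w #^omega *)
Definition mu (w : list Sigma) : nat -> option Sigma := fun i => nth_error w i.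

Definition mu_rel (R : list (list Sigma) -> Prop) : list (nat -> option Sigma) -> Prop :=
  fun fs => exists w, R w /\ fs = map mu w.

End HashLogic.

Inductive sform : Type :=
| SSub (a b : nat)
| SLL (a b : nat)
| SEq (a b : nat)
| SNot (f : sform)
| SAnd (f g : sform)
| SEx (f : sform).

Fixpoint sfvb (f : sform) : nat :=
  match f with
  | SSub a b | SLL a b | SEq a b => max (S a) (S b)
  | SNot g => sfvb g
  | SAnd g h => max (sfvb g) (sfvb h)
  | SEx g => pred (sfvb g)
  end.

(* Elements of S^+(omega): finite subsets of omega, represented as
   predicates (equality of elements is extensional equality). *)
Definition finite_set (X : nat -> Prop) : Prop := exists m, forall k, X k -> k < m.

Fixpoint ssat (e : nat -> nat -> Prop) (f : sform) : Prop :=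
  match f with
  | SSub a b => forall k, e a k -> e b k
  | SLL a b => exists m k, m < k /\ (forall j, e a j <-> j = m) /\
                                   (forall j, e b j <-> j = k)
  | SEq a b => forall k, e a k <-> e b k
  | SNot g => ~ ssat e g
  | SAnd g h => ssat e g /\ ssat e h
  | SEx g => exists X, finite_set X /\ ssat (scons X e) g
  end.

Section Reduction.
Variable Sym : Type.
Variable ar : Sym -> nat.
Variable Sigma : Type.
Variable rel : Sym -> list Sigma -> Prop.

Definition theta_set (thetas : list (hform Sym)) (fs : list (nat -> option Sigma))
  (i : nat) : nat -> Prop :=
  match nth_error thetas i with
  | Some th => fun x => hsat ar rel (fun j => nth j fs (fun _ => None) x) th
  | None => fun _ => False
  end.

Definition admits_reduction_sequence (n : nat)
  (P : list (nat -> option Sigma) -> Prop) : Prop :=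
  exists (G : sform) (thetas : list (hform Sym)),
    sfvb G <= length thetas /\
    Forall (fun th => hfvb th <= n /\ ~ hsat ar rel (fun _ => None) th) thetas /\
    forall fs : list (nat -> option Sigma),
      length fs = n -> Forall (@in_W Sigma) fs ->
      (P fs <-> ssat (theta_set thetas fs) G).
End Reduction.

(* Main.v *)
Require Import Defs.
From Stdlib Require Import List Arith Lia ClassicalEpsilon FunctionalExtensionality.
Import ListNotations.
Local Open Scope bool_scope.
Local Open Scope nat_scope.

Arguments MLt {Sym} x y.
Arguments MEq {Sym} x y.
Arguments MIn {Sym} x X.
Arguments HHash {Sym} v.
Arguments HEq {Sym} u v.

Definition pb (P : Prop) : bool := if excluded_middle_informative P then true else false.
Lemma pbE (P : Prop) : pb P = true <-> P.
Proof. unfold pb; destruct (excluded_middle_informative P); split; intuition; discriminate. Qed.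
Lemma pbF (P : Prop) : pb P = false <-> ~ P.
Proof. unfold pb; destruct (excluded_middle_informative P); split; intuition; discriminate. Qed.

Lemma pbT (P : Prop) : pb P = true -> P. Proof. apply pbE. Qed.
Lemma pbI (P : Prop) : P -> pb P = true. Proof. apply pbE. Qed.
Lemma pbN (P : Prop) : ~ P -> pb P = false. Proof. apply pbF. Qed.
Lemma pbFN (P : Prop) : pb P = false -> ~ P. Proof. apply pbF. Qed.

Definition letter := nat -> bool.
Definition zero : letter := fun _ => false.
Definition col (e : nat -> nat -> Prop) (p : nat) : letter := fun i => pb (e i p).

Record aut := { Q : Type; en : list Q; q0 : Q; dl : Q -> letter -> Q; fin : Q -> Prop;
  q0_in : In q0 en; dl_in : forall q c, In q en -> In (dl q c) en }.

Fixpoint runfrom (A : aut) (q : Q A) (c : nat -> letter) (K : nat) : Q A :=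
  match K with 0 => q | S K' => dl A (runfrom A q c K') (c K') end.
Definition run (A : aut) c M := runfrom A (q0 A) c M.

Lemma runfrom_in A q c K : In q (en A) -> In (runfrom A q c K) (en A).
Proof. induction K; simpl; auto using dl_in. Qed.

Lemma runfrom_ext A q c c' K : (forall p, p < K -> c p = c' p) -> runfrom A q c K = runfrom A q c' K.
Proof. induction K; simpl; intros H; auto. rewrite IHK by (intros; apply H; lia). rewrite H by lia; auto. Qed.

Lemma runfrom_add A q c M K : runfrom A q c (M + K) = runfrom A (runfrom A q c M) (fun p => c (M + p)) K.
Proof. induction K; simpl. now rewrite Nat.add_0_r. rewrite <- IHK. now rewrite Nat.add_succ_r. Qed.

Definition good (A : aut) (g : sform) : Prop :=
  forall e M, (forall i p, e i p -> p < M) -> (ssat e g <-> fin A (run A (col e) M)).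

Definition autSub (a b : nat) : aut.
refine {| Q := bool; en := [true; false]; q0 := true;
  dl := fun q c => q && implb (c a) (c b); fin := fun q => q = true |}.
- simpl; auto.
- intros q c _; destruct (q && _); simpl; auto.
Defined.

Lemma autSub_run a b e M : run (autSub a b) (col e) M = true <-> forall p, p < M -> e a p -> e b p.
Proof.
  induction M; simpl. split; intros; auto; lia.
  unfold run in *; simpl. rewrite Bool.andb_true_iff, IHM. split.
  - intros [H1 H2] p Hp Ha. destruct (Nat.eq_dec p M). subst. unfold col in H2.
    destruct (pb (e a M)) eqn:E1; destruct (pb (e b M)) eqn:E2; simpl in H2; try discriminate.
    now apply pbT. apply pbFN in E1; contradiction. apply pbFN in E1; contradiction.
    apply H1; auto; lia.
  - intros H; split. intros; apply H; auto; lia. unfold col.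
    destruct (pb (e a M)) eqn:E1; simpl; auto. apply pbT in E1. apply pbI. apply H; auto.
Qed.

Lemma autSub_good a b : good (autSub a b) (SSub a b).
Proof.
  intros e M HM; simpl. change (ssat e (SSub a b) <-> run (autSub a b) (col e) M = true).
  rewrite autSub_run; simpl; split; intros H; intros; eauto.
Qed.

Definition autEq (a b : nat) : aut.
refine {| Q := bool; en := [true; false]; q0 := true;
  dl := fun q c => q && Bool.eqb (c a) (c b); fin := fun q => q = true |}.
- simpl; auto.
- intros q c _; destruct (q && _); simpl; auto.
Defined.

Lemma autEq_run a b e M : run (autEq a b) (col e) M = true <-> forall p, p < M -> (e a p <-> e b p).
Proof.
  induction M; simpl. split; intros; auto; lia.
  unfold run in *; simpl. rewrite Bool.andb_true_iff, IHM. split.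
  - intros [H1 H2] p Hp. destruct (Nat.eq_dec p M). subst. unfold col in H2.
    apply Bool.eqb_prop in H2. split; intro X; apply pbT; [rewrite <- H2|rewrite H2]; now apply pbI.
    apply H1; auto; lia.
  - intros H; split. intros; apply H; auto; lia. unfold col.
    apply Bool.eqb_true_iff. specialize (H M ltac:(lia)).
    destruct (pb (e a M)) eqn:E1; destruct (pb (e b M)) eqn:E2; auto.
    apply pbT in E1; apply pbFN in E2; tauto. apply pbT in E2; apply pbFN in E1; tauto.
Qed.

Lemma autEq_good a b : good (autEq a b) (SEq a b).
Proof.
  intros e M HM; simpl. change (ssat e (SEq a b) <-> run (autEq a b) (col e) M = true).
  rewrite autEq_run; simpl; split; intros H; intros. apply H; auto.
  split; intros Hx; apply H; eauto.
Qed.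
Definition dlLL (a b : nat) (q : nat) (c : letter) : nat :=
  match q with
  | 0 => if c a then (if c b then 3 else 1) else (if c b then 3 else 0)
  | 1 => if c a then 3 else if c b then 2 else 1
  | 2 => if orb (c a) (c b) then 3 else 2
  | _ => 3 end.

Definition autLL (a b : nat) : aut.
refine {| Q := nat; en := [0;1;2;3]; q0 := 0; dl := dlLL a b; fin := fun q => q = 2 |}.
- simpl; auto.
- intros q c _. unfold dlLL. destruct q as [|[|[|q]]]; repeat (destruct (c _)); simpl; auto 10.
Defined.

Section LL.
Variables (a b : nat) (e : nat -> nat -> Prop).
Definition P0 M := forall j, j < M -> ~ e a j /\ ~ e b j.
Definition P1 M := exists m, m < M /\ (forall j, j < M -> (e a j <-> j = m)) /\ (forall j, j < M -> ~ e b j).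
Definition P2 M := exists m k, m < k /\ k < M /\ (forall j, j < M -> (e a j <-> j = m)) /\ (forall j, j < M -> (e b j <-> j = k)).

Lemma autLL_run M : let s := run (autLL a b) (col e) M in
  (s = 0 -> P0 M) /\ (s = 1 -> P1 M) /\ (s = 2 -> P2 M) /\
  (P0 M -> s = 0) /\ (P1 M -> s = 1) /\ (P2 M -> s = 2).
Proof.
  induction M; simpl.
  - unfold run; simpl. split; [|split; [|split; [|split; [|split]]]]; intros H; try discriminate; auto.
    + intros j Hj; lia.
    + destruct H as [m [Hm _]]; lia.
    + destruct H as [m [k [_ [Hk _]]]]; lia.
  - destruct IHM as [F0 [F1 [F2 [B0 [B1 B2]]]]]. unfold run in *.
    change (runfrom (autLL a b) (q0 (autLL a b)) (col e) (S M)) with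
      (dlLL a b (runfrom (autLL a b) (q0 (autLL a b)) (col e) M) (col e M)).
    remember (runfrom (autLL a b) (q0 (autLL a b)) (col e) M) as s eqn:Es; clear Es.
    unfold dlLL, col.
    destruct (pb (e a M)) eqn:EA; destruct (pb (e b M)) eqn:EB;
    [apply pbT in EA; apply pbT in EB | apply pbT in EA; apply pbFN in EB
    | apply pbFN in EA; apply pbT in EB | apply pbFN in EA; apply pbFN in EB].
    +
      split; [|split; [|split; [|split; [|split]]]]; intros H.
      * destruct s as [|[|[|]]]; discriminate.
      * destruct s as [|[|[|]]]; discriminate.
      * destruct s as [|[|[|]]]; discriminate.
      * exfalso; exact (proj1 (H M ltac:(lia)) EA).
      * exfalso; destruct H as [m [Hm [Ha Hb]]]; apply (Hb M); auto.
      * exfalso; destruct H as [m [k [Hmk [Hk [Ha Hb]]]]].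
        assert (M = m) by (apply Ha; auto). assert (M = k) by (apply Hb; auto). lia.
    +
      split; [|split; [|split; [|split; [|split]]]]; intros H.
      * destruct s as [|[|[|]]]; discriminate.
      * destruct s as [|[|[|]]]; try discriminate.
        unfold P1; exists M; split; [lia|split]; intros j Hj; [split|].
        -- intros Hx. destruct (Nat.eq_dec j M); auto. exfalso; exact (proj1 (F0 eq_refl j ltac:(lia)) Hx).
        -- intros ->; auto.
        -- intros Hx. destruct (Nat.eq_dec j M). subst; auto. exact (proj2 (F0 eq_refl j ltac:(lia)) Hx).
      * destruct s as [|[|[|]]]; discriminate.
      * exfalso; exact (proj1 (H M ltac:(lia)) EA).
      * destruct H as [m [Hm [Ha Hb]]].
        assert (M = m) by (apply Ha; auto). subst m.
        rewrite B0; auto. intros j Hj; split. intros X; apply Ha in X; lia. apply Hb; lia.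
      * exfalso; destruct H as [m [k [Hmk [Hk [Ha Hb]]]]].
        assert (M = m) by (apply Ha; auto). lia.
    +
      split; [|split; [|split; [|split; [|split]]]]; intros H.
      * destruct s as [|[|[|]]]; discriminate.
      * destruct s as [|[|[|]]]; discriminate.
      * destruct s as [|[|[|]]]; try discriminate.
        destruct (F1 eq_refl) as [m [Hm [Ha Hb]]].
        unfold P2; exists m, M; split; [lia|split; [lia|split]]; intros j Hj; split.
        -- intros X; destruct (Nat.eq_dec j M). subst; contradiction. apply Ha; auto; lia.
        -- intros X; apply Ha; auto; lia.
        -- intros X; destruct (Nat.eq_dec j M); auto. exfalso; apply (Hb j); auto; lia.
        -- intros ->; auto.
      * exfalso; exact (proj2 (H M ltac:(lia)) EB).
      * exfalso; destruct H as [m [Hm [Ha Hb]]]; apply (Hb M); auto.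
      * destruct H as [m [k [Hmk [Hk [Ha Hb]]]]].
        assert (M = k) by (apply Hb; auto). subst k.
        rewrite B1; auto. unfold P1; exists m; split; [lia|split]; intros j Hj; [split|].
        intros X; apply Ha; auto; lia. intros X; apply Ha; auto; lia.
        intros X; apply Hb in X; lia.
    +
      split; [|split; [|split; [|split; [|split]]]]; intros H.
      * destruct s as [|[|[|]]]; try discriminate. intros j Hj.
        destruct (Nat.eq_dec j M). subst; auto. apply F0; auto; lia.
      * destruct s as [|[|[|]]]; try discriminate.
        destruct (F1 eq_refl) as [m [Hm [Ha Hb]]]. unfold P1; exists m; split; [lia|split]; intros j Hj; [split|].
        -- intros X; destruct (Nat.eq_dec j M). subst; contradiction. apply Ha; auto; lia.
        -- intros X; subst j. apply Ha; auto; lia.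
        -- intros X; destruct (Nat.eq_dec j M). subst; contradiction. apply (Hb j); auto; lia.
      * destruct s as [|[|[|]]]; try discriminate.
        destruct (F2 eq_refl) as [m [k [Hmk [Hk [Ha Hb]]]]]. unfold P2; exists m, k; split; [lia|split; [lia|split]]; intros j Hj; split.
        -- intros X; destruct (Nat.eq_dec j M). subst; contradiction. apply Ha; auto; lia.
        -- intros X; subst j. apply Ha; auto; lia.
        -- intros X; destruct (Nat.eq_dec j M). subst; contradiction. apply Hb; auto; lia.
        -- intros X; subst j. apply Hb; auto; lia.
      * rewrite B0; auto. intros j Hj; apply H; lia.
      * destruct H as [m [Hm [Ha Hb]]].
        assert (m <> M) by (intros ->; apply EA, Ha; auto).
        rewrite B1; auto. unfold P1; exists m; split; [lia|split]; intros j Hj; [split|].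
        intros X; apply Ha; auto; lia. intros X; apply Ha; auto; lia. apply Hb; lia.
      * destruct H as [m [k [Hmk [Hk [Ha Hb]]]]].
        assert (k <> M) by (intros ->; apply EB, Hb; auto).
        rewrite B2; auto. unfold P2; exists m, k; split; [lia|split; [lia|split]]; intros j Hj; split.
        intros X; apply Ha; auto; lia. intros X; apply Ha; auto; lia.
        intros X; apply Hb; auto; lia. intros X; apply Hb; auto; lia.
Qed.
End LL.

Lemma autLL_good a b : good (autLL a b) (SLL a b).
Proof.
  intros e M HM. destruct (autLL_run a b e M) as [_ [_ [F2 [_ [_ B2]]]]].
  simpl. change (fin (autLL a b) ?x) with (x = 2). split.
  - intros [m [k [Hmk [Ha Hb]]]]. apply B2. exists m, k.
    assert (k < M) by (apply (HM b); apply Hb; auto).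
    repeat split; auto; intros; [apply Ha|apply Ha|apply Hb|apply Hb]; auto.
  - intros H. destruct (F2 H) as [m [k [Hmk [Hk [Ha Hb]]]]]. exists m, k; repeat split; auto.
    + intros X; apply Ha; auto; eapply HM; eauto.
    + intros ->; apply Ha; auto; lia.
    + intros X; apply Hb; auto; eapply HM; eauto.
    + intros ->; apply Hb; auto.
Qed.
Definition autNot (A : aut) : aut :=
  {| Q := Q A; en := en A; q0 := q0 A; dl := dl A; fin := fun q => ~ fin A q;
     q0_in := q0_in A; dl_in := dl_in A |}.

Lemma autNot_good A g : good A g -> good (autNot A) (SNot g).
Proof.
  intros H e M HM. assert (E : forall c K, run (autNot A) c K = run A c K).
  { intros c K; induction K; [reflexivity|]. unfold run in *. cbn [runfrom]. rewrite IHK. reflexivity. }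
  simpl. rewrite E, (H e M HM). reflexivity.
Qed.

Definition autAnd (A B : aut) : aut.
refine {| Q := (Q A * Q B)%type; en := list_prod (en A) (en B); q0 := (q0 A, q0 B);
  dl := fun q c => (dl A (fst q) c, dl B (snd q) c); fin := fun q => fin A (fst q) /\ fin B (snd q) |}.
- apply in_prod; apply q0_in.
- intros [x y] c Hq. apply in_prod_iff in Hq. apply in_prod; apply dl_in; tauto.
Defined.

Lemma autAnd_run A B c M : run (autAnd A B) c M = (run A c M, run B c M).
Proof. induction M; [reflexivity|]. unfold run in *. cbn [runfrom]. rewrite IHM. reflexivity. Qed.

Lemma autAnd_good A B g h : good A g -> good B h -> good (autAnd A B) (SAnd g h).
Proof. intros H1 H2 e M HM. simpl. rewrite autAnd_run; simpl. rewrite (H1 e M HM), (H2 e M HM). tauto. Qed.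

Fixpoint av (n : nat) : list (list bool) :=
  match n with 0 => [[]] | S n => flat_map (fun l => [true :: l; false :: l]) (av n) end.

Lemma av_spec n l : In l (av n) <-> length l = n.
Proof.
  revert l; induction n; intros l; simpl.
  - split. intros [<-|[]]; auto. destruct l; simpl; try discriminate; auto.
  - rewrite in_flat_map. split.
    + intros [x [Hx Hl]]. apply IHn in Hx. simpl in Hl; destruct Hl as [<-|[<-|[]]]; simpl; auto.
    + intros H. destruct l as [|b l]; try discriminate. exists l; split. apply IHn; simpl in H; lia.
      destruct b; simpl; auto.
Qed.

Lemma nth_map_seq {T} (g : nat -> T) N j d : j < N -> nth j (map g (seq 0 N)) d = g j.
Proof.
  intros Hj. rewrite nth_indep with (d' := g 0) by (rewrite length_map, length_seq; auto).
  rewrite map_nth, seq_nth; auto.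
Qed.

Section EX.
Variable A : aut.
Let N := length (en A).
Let eN j := nth j (en A) (q0 A).
Definition memS (S : list bool) (q : Q A) := exists j, j < N /\ nth j S false = true /\ eN j = q.
Definition q0S := map (fun j => pb (eN j = q0 A)) (seq 0 N).
Definition dlS (S : list bool) (c : letter) :=
  map (fun j => pb (exists i b, i < N /\ nth i S false = true /\ dl A (eN i) (scons b c) = eN j)) (seq 0 N).
Definition finS (S : list bool) := exists q, memS S q /\ exists K (beta : nat -> bool),
  fin A (runfrom A q (fun p => scons (beta p) zero) K).

Definition autEx : aut.
refine {| Q := list bool; en := av N; q0 := q0S; dl := dlS; fin := finS |}.
- apply av_spec. unfold q0S; rewrite length_map, length_seq; auto.
- intros q c _. apply av_spec. unfold dlS; rewrite length_map, length_seq; auto.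
Defined.

Lemma memS_q0 q : memS q0S q <-> q = q0 A.
Proof.
  unfold memS, q0S. split.
  - intros [j [Hj [H1 H2]]]. rewrite nth_map_seq in H1 by auto. apply pbT in H1. congruence.
  - intros ->. destruct (In_nth (en A) (q0 A) (q0 A) (q0_in A)) as [j [Hj H]].
    exists j; repeat split; auto. rewrite nth_map_seq by auto. apply pbI; auto.
Qed.

Lemma memS_dl S c q' : memS (dlS S c) q' <-> exists q b, memS S q /\ dl A q (scons b c) = q'.
Proof.
  unfold memS, dlS. split.
  - intros [j [Hj [H1 H2]]]. rewrite nth_map_seq in H1 by auto. apply pbT in H1.
    destruct H1 as [i [b [Hi [H3 H4]]]]. exists (eN i), b. split. exists i; auto. congruence.
  - intros [q [b [[i [Hi [H1 H2]]] H3]]].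
    assert (Hin : In q' (en A)). { rewrite <- H3, <- H2. apply dl_in. apply nth_In; auto. }
    destruct (In_nth (en A) q' (q0 A) Hin) as [j [Hj H]].
    exists j; repeat split; auto. rewrite nth_map_seq by auto. apply pbI.
    exists i, b; repeat split; auto. rewrite H2. change (eN j) with (nth j (en A) (q0 A)). congruence.
Qed.

Lemma autEx_run c M q : memS (run autEx c M) q <->
  exists beta : nat -> bool, run A (fun p => scons (beta p) (c p)) M = q.
Proof.
  revert q; induction M; intros q; unfold run in *; simpl.
  - rewrite memS_q0. split. intros ->; exists (fun _ => true); auto. intros [_ <-]; auto.
  - rewrite memS_dl. split.
    + intros [q1 [b [H1 H2]]]. apply IHM in H1. destruct H1 as [beta Hb].
      exists (fun p => if Nat.eqb p M then b else beta p). simpl.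
      rewrite Nat.eqb_refl. rewrite <- H2, <- Hb. f_equal. apply runfrom_ext.
      intros p Hp. destruct (Nat.eqb_spec p M); auto; lia.
    + intros [beta Hb]. exists (runfrom A (q0 A) (fun p => scons (beta p) (c p)) M), (beta M).
      split; auto. apply IHM. exists beta; auto.
Qed.
End EX.

Lemma col_scons X e p : col (scons X e) p = scons (pb (X p)) (col e p).
Proof. apply functional_extensionality; intros [|i]; reflexivity. Qed.

Lemma col_zero e p M : (forall i p, e i p -> p < M) -> M <= p -> col e p = zero.
Proof. intros HM Hp. apply functional_extensionality; intros i. unfold col, zero. apply pbN. intros H; apply HM in H; lia. Qed.

Lemma autEx_good A g : good A g -> good (autEx A) (SEx g).
Proof.
  intros H e M HM. simpl. split.
  - intros [X [[M' HX] Hg]].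
    assert (HB : forall i p, scons X e i p -> p < M + M').
    { intros [|i] p Hp; simpl in Hp. apply HX in Hp; lia. apply HM in Hp; lia. }
    apply (H _ _ HB) in Hg. unfold run in Hg. rewrite runfrom_add in Hg.
    exists (runfrom A (q0 A) (col (scons X e)) M). split.
    + apply autEx_run. exists (fun p => pb (X p)). unfold run. apply runfrom_ext.
      intros; symmetry; apply col_scons.
    + exists M', (fun p => pb (X (M + p))). erewrite runfrom_ext; [exact Hg|].
      intros p Hp. simpl. rewrite col_scons. rewrite (col_zero e (M + p) M); auto; lia.
  - intros [q [Hq [K [beta2 Hf]]]]. apply autEx_run in Hq. destruct Hq as [beta Hb].
    set (X := fun p => (p < M /\ beta p = true) \/ (M <= p < M + K /\ beta2 (p - M) = true)).
    exists X. split. exists (M + K). intros p [[Hp _]|[Hp _]]; lia.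
    assert (HB : forall i p, scons X e i p -> p < M + K).
    { intros [|i] p Hp; simpl in Hp. destruct Hp as [[Hp _]|[Hp _]]; lia. apply HM in Hp; lia. }
    apply (H _ _ HB). unfold run. rewrite runfrom_add.
    replace (runfrom A (q0 A) (col (scons X e)) M) with q.
    + erewrite runfrom_ext; [exact Hf|]. intros p Hp. simpl. rewrite col_scons.
      rewrite (col_zero e (M + p) M) by (auto; lia). f_equal.
      destruct (beta2 p) eqn:E.
      * apply pbI. right. split. lia. replace (M + p - M) with p by lia; auto.
      * apply pbN. intros [[H1 _]|[_ H2]]. lia. replace (M + p - M) with p in H2 by lia. congruence.
    + rewrite <- Hb. unfold run. apply runfrom_ext. intros p Hp. rewrite col_scons. f_equal.
      destruct (beta p) eqn:E.
      * symmetry; apply pbI. left; auto.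
      * symmetry; apply pbN. intros [[_ H2]|[H1 _]]. congruence. lia.
Qed.

Fixpoint autof (g : sform) : aut :=
  match g with
  | SSub a b => autSub a b
  | SLL a b => autLL a b
  | SEq a b => autEq a b
  | SNot g => autNot (autof g)
  | SAnd g h => autAnd (autof g) (autof h)
  | SEx g => autEx (autof g)
  end.

Lemma autof_good g : good (autof g) g.
Proof.
  induction g; simpl.
  apply autSub_good. apply autLL_good. apply autEq_good.
  apply autNot_good; auto. apply autAnd_good; auto. apply autEx_good; auto.
Qed.
Section MSOLIB.
Variable Sym : Type.
Variable ar : Sym -> nat.
Variable Sigma : Type.
Variable rel : Sym -> list Sigma -> Prop.

Local Notation MF := (mso Sym).
Local Notation MS := (msat ar rel).

Definition Fls : MF := MEx1 (MNot (MEq 0 0)).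
Definition Tru : MF := MNot Fls.
Definition MOr (f g : MF) : MF := MNot (MAnd (MNot f) (MNot g)).
Definition MImp (f g : MF) : MF := MNot (MAnd f (MNot g)).
Definition MAll (f : MF) : MF := MNot (MEx1 (MNot f)).
Definition MAndL (fs : list MF) : MF := fold_right (@MAnd Sym) Tru fs.
Definition MOrL (fs : list MF) : MF := MNot (MAndL (map (@MNot Sym) fs)).
Fixpoint exN (N : nat) (f : MF) : MF := match N with 0 => f | S N => MEx2 (exN N f) end.

Section SEM.
Variable w : list (list Sigma).
Let L := conv_len w.

Lemma MAnd_sem e1 e2 f g : MS w e1 e2 (MAnd f g) <-> MS w e1 e2 f /\ MS w e1 e2 g.
Proof. reflexivity. Qed.
Lemma MNot_sem e1 e2 f : MS w e1 e2 (MNot f) <-> ~ MS w e1 e2 f.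
Proof. reflexivity. Qed.
Lemma MEx1_sem e1 e2 f : MS w e1 e2 (MEx1 f) <-> exists p, p < L /\ MS w (scons p e1) e2 f.
Proof. reflexivity. Qed.
Lemma MIn_sem e1 e2 x X : MS w e1 e2 (MIn x X) <-> e2 X (e1 x).
Proof. reflexivity. Qed.

Lemma Fls_sem e1 e2 : MS w e1 e2 Fls <-> False.
Proof. simpl. split; [intros [p [_ H]]; auto | tauto]. Qed.
Lemma Tru_sem e1 e2 : MS w e1 e2 Tru <-> True.
Proof. split; [tauto|]. intros _ H. exact (proj1 (Fls_sem e1 e2) H). Qed.
Lemma MOr_sem e1 e2 f g : MS w e1 e2 (MOr f g) <-> MS w e1 e2 f \/ MS w e1 e2 g.
Proof. simpl. tauto. Qed.
Lemma MImp_sem e1 e2 f g : MS w e1 e2 (MImp f g) <-> (MS w e1 e2 f -> MS w e1 e2 g).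
Proof. simpl. tauto. Qed.
Lemma MAll_sem e1 e2 f : MS w e1 e2 (MAll f) <-> forall p, p < L -> MS w (scons p e1) e2 f.
Proof.
  simpl. split.
  - intros H p Hp. apply NNPP; intros H'; apply H; eauto.
  - intros H [p [Hp H']]; apply H', H; auto.
Qed.
Lemma MAndL_sem e1 e2 fs : MS w e1 e2 (MAndL fs) <-> forall f, In f fs -> MS w e1 e2 f.
Proof.
  induction fs; simpl. rewrite (Tru_sem e1 e2). split; tauto.
  rewrite IHfs. split. intros [H1 H2] f [<-|Hf]; auto. intros H; split; auto.
Qed.
Lemma MOrL_sem e1 e2 fs : MS w e1 e2 (MOrL fs) <-> exists f, In f fs /\ MS w e1 e2 f.
Proof.
  unfold MOrL. change (~ MS w e1 e2 (MAndL (map (@MNot Sym) fs)) <-> exists f, In f fs /\ MS w e1 e2 f).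
  rewrite MAndL_sem. split.
  - intros H. apply NNPP; intros H'; apply H. intros f Hf. apply in_map_iff in Hf.
    destruct Hf as [g [<- Hg]]. simpl. intros Hs; apply H'; eauto.
  - intros [f [Hf Hs]] H. apply (H (MNot f)); auto. apply in_map; auto.
Qed.

Lemma exN_sem N : forall e1 e2 f, MS w e1 e2 (exN N f) <->
  exists Xs : nat -> nat -> Prop, (forall j p, j < N -> Xs j p -> p < L) /\
    MS w e1 (fun j => if j <? N then Xs j else e2 (j - N)) f.
Proof.
  induction N; intros e1 e2 f; simpl.
  - split. intros H; exists (fun _ _ => False); split; [tauto|]. 
    replace (fun j => e2 (j - 0)) with e2; auto. apply functional_extensionality; intros; f_equal; lia.
    intros [Xs [_ H]]. replace e2 with (fun j => e2 (j - 0)); auto. apply functional_extensionality; intros; f_equal; lia.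
  - split.
    + intros [X [HX H]]. apply IHN in H. destruct H as [Xs [HXs H]].
      exists (fun j => if j <? N then Xs j else X). split.
      * intros j p Hj. destruct (Nat.ltb_spec j N); eauto.
      * match goal with H : msat _ _ _ _ ?E _ |- msat _ _ _ _ ?E' _ => replace E' with E; auto end.
        apply functional_extensionality; intros j.
        destruct (Nat.ltb_spec j N); destruct (Nat.ltb_spec j (S N)); try lia; auto.
        -- replace (j - N) with 0 by lia. reflexivity.
        -- replace (j - N) with (S (j - S N)) by lia. reflexivity.
    + intros [Ys [HYs H]]. exists (Ys N). split. intros p; apply HYs; lia.
      apply IHN. exists Ys. split. intros j p Hj HY; apply (HYs j p); auto; lia.
      match goal with H : msat _ _ _ _ ?E _ |- msat _ _ _ _ ?E' _ => replace E' with E; auto end.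
      apply functional_extensionality; intros j.
      destruct (Nat.ltb_spec j N); destruct (Nat.ltb_spec j (S N)); try lia; auto.
      -- replace (j - N) with 0 by lia. replace j with N by lia. reflexivity.
      -- replace (j - N) with (S (j - S N)) by lia. reflexivity.
Qed.
End SEM.

Variable n : nat.
Definition OK (b1 b2 : nat) (f : MF) := mfv1 f <= b1 /\ mfv2 f <= b2 /\ mso_wf n f.

Lemma OK_Lt b1 b2 x y : x < b1 -> y < b1 -> OK b1 b2 (MLt x y).
Proof. unfold OK; simpl; lia. Qed.
Lemma OK_In b1 b2 x X : x < b1 -> X < b2 -> OK b1 b2 (MIn x X).
Proof. unfold OK; simpl; lia. Qed.
Lemma OK_Alpha b1 b2 F x : x < b1 -> 0 < hfvb F <= n -> OK b1 b2 (MAlpha F x).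
Proof. unfold OK; simpl; lia. Qed.
Lemma OK_Not b1 b2 f : OK b1 b2 f -> OK b1 b2 (MNot f).
Proof. unfold OK; simpl; tauto. Qed.
Lemma OK_And b1 b2 f g : OK b1 b2 f -> OK b1 b2 g -> OK b1 b2 (MAnd f g).
Proof. unfold OK; simpl; intuition lia. Qed.
Lemma OK_Ex1 b1 b2 f : OK (S b1) b2 f -> OK b1 b2 (MEx1 f).
Proof. unfold OK; simpl; intuition lia. Qed.
Lemma OK_Ex2 b1 b2 f : OK b1 (S b2) f -> OK b1 b2 (MEx2 f).
Proof. unfold OK; simpl; intuition lia. Qed.
Lemma OK_Fls b1 b2 : OK b1 b2 Fls.
Proof. unfold OK; simpl; lia. Qed.
Lemma OK_Tru b1 b2 : OK b1 b2 Tru.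
Proof. apply OK_Not, OK_Fls. Qed.
Lemma OK_MOr b1 b2 f g : OK b1 b2 f -> OK b1 b2 g -> OK b1 b2 (MOr f g).
Proof. intros; unfold MOr; auto using OK_Not, OK_And. Qed.
Lemma OK_MImp b1 b2 f g : OK b1 b2 f -> OK b1 b2 g -> OK b1 b2 (MImp f g).
Proof. intros; unfold MImp; auto using OK_Not, OK_And. Qed.
Lemma OK_MAll b1 b2 f : OK (S b1) b2 f -> OK b1 b2 (MAll f).
Proof. intros; unfold MAll; auto using OK_Not, OK_Ex1. Qed.
Lemma OK_MAndL b1 b2 fs : (forall f, In f fs -> OK b1 b2 f) -> OK b1 b2 (MAndL fs).
Proof. induction fs; simpl; intros H. apply OK_Tru. apply OK_And; auto. Qed.
Lemma OK_MOrL b1 b2 fs : (forall f, In f fs -> OK b1 b2 f) -> OK b1 b2 (MOrL fs).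
Proof.
  intros H; unfold MOrL; apply OK_Not, OK_MAndL. intros f Hf; apply in_map_iff in Hf.
  destruct Hf as [g [<- Hg]]; apply OK_Not; auto.
Qed.
Lemma OK_exN b1 N b2 f : OK b1 (N + b2) f -> OK b1 b2 (exN N f).
Proof. revert b2; induction N; simpl; intros b2 H; auto. apply OK_Ex2. apply IHN. now replace (N + S b2) with (S (N + b2)) by lia. Qed.
End MSOLIB.
Arguments Fls {Sym}. Arguments Tru {Sym}. Arguments MOr {Sym} f g. Arguments MImp {Sym} f g.
Arguments MAll {Sym} f. Arguments MAndL {Sym} fs. Arguments MOrL {Sym} fs. Arguments exN {Sym} N f.
Arguments OK {Sym} n b1 b2 f.
Section PSI.
Variable Sym : Type.
Variable ar : Sym -> nat.
Variable Sigma : Type.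
Variable rel : Sym -> list Sigma -> Prop.
Variable n : nat.
Variable thetas : list (hform Sym).
Variable A : aut.
Local Notation MF := (mso Sym).
Local Notation MS := (msat ar rel).
Let k := length thetas.
Let Nq := length (en A).
Let eN j := nth j (en A) (q0 A).
Definition idx (q : Q A) : nat := epsilon (inhabits 0) (fun j => j < Nq /\ eN j = q).
Lemma idx_spec q : In q (en A) -> idx q < Nq /\ eN (idx q) = q.
Proof.
  intros H. unfold idx. apply epsilon_spec. destruct (In_nth _ _ (q0 A) H) as [j [Hj E]].
  exists j; auto.
Qed.

Definition al (i x : nat) : MF := MAlpha (HAnd (nth i thetas (HEq 0 0)) (HEq 0 0)) x.
Definition lit (i : nat) (b : bool) (x : nat) : MF := if b then al i x else MNot (al i x).
Definition letterF (v : list bool) (x : nat) : MF :=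
  MAndL (map (fun i => lit i (nth i v false) x) (seq 0 k)).
Definition lv (v : list bool) : letter := fun i => nth i v false.
Definition First (x : nat) : MF := MNot (MEx1 (MLt 0 (S x))).
Definition Last (x : nat) : MF := MNot (MEx1 (MLt (S x) 0)).
Definition Succ (y x : nat) : MF := MAnd (MLt y x) (MNot (MEx1 (MAnd (MLt (S y) 0) (MLt 0 (S x))))).
Definition PrevIn (j : nat) : MF := MEx1 (MAnd (Succ 0 1) (MIn 0 j)).
Definition Uniq : MF := MAndL (map (fun i => MAndL (map (fun j =>
  if Nat.eqb i j then Tru else MNot (MAnd (MIn 0 i) (MIn 0 j))) (seq 0 Nq))) (seq 0 Nq)).
Definition Init : MF := MImp (First 0) (MAndL (map (fun v =>
  MImp (letterF v 0) (MIn 0 (idx (dl A (q0 A) (lv v))))) (av k))).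
Definition Trans : MF := MAndL (map (fun j => MAndL (map (fun v =>
  MImp (MAnd (PrevIn j) (letterF v 0)) (MIn 0 (idx (dl A (eN j) (lv v))))) (av k))) (seq 0 Nq)).
Definition Cons : MF := MAll (MAnd Uniq (MAnd Init Trans)).
Definition FinF : MF := MOr (MAnd (MNot (MEx1 Tru)) (if pb (fin A (q0 A)) then Tru else Fls))
  (MEx1 (MAnd (Last 0) (MOrL (map (fun j => if pb (fin A (eN j)) then MIn 0 j else Fls) (seq 0 Nq))))).
Definition Psi : MF := exN Nq (MAnd Cons FinF).

Hypothesis Hn : 1 <= n.
Hypothesis Hth : forall th, In th thetas -> hfvb th <= n.

Lemma hfvb_nth i : hfvb (nth i thetas (HEq 0 0)) <= n.
Proof. destruct (nth_in_or_default i thetas (HEq 0 0)) as [H|H]. auto. rewrite H; simpl; lia. Qed.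

Lemma OK_al b1 b2 i x : x < b1 -> OK n b1 b2 (al i x).
Proof. intros; apply OK_Alpha; auto. simpl. pose proof (hfvb_nth i); lia. Qed.
Lemma OK_letterF b1 b2 v x : x < b1 -> OK n b1 b2 (letterF v x).
Proof.
  intros H. apply OK_MAndL. intros f Hf. apply in_map_iff in Hf. destruct Hf as [i [<- _]].
  unfold lit. destruct (nth i v false); [|apply OK_Not]; apply OK_al; auto.
Qed.

Lemma OK_Psi : OK n 0 0 Psi.
Proof.
  unfold Psi. apply OK_exN. rewrite Nat.add_0_r. apply OK_And.
  - apply OK_MAll. apply OK_And; [|apply OK_And].
    + apply OK_MAndL; intros f Hf; apply in_map_iff in Hf; destruct Hf as [i [<- Hi]].
      apply OK_MAndL; intros f Hf; apply in_map_iff in Hf; destruct Hf as [j [<- Hj]].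
      apply in_seq in Hi, Hj. destruct (Nat.eqb i j). apply OK_Tru.
      apply OK_Not, OK_And; apply OK_In; lia.
    + apply OK_MImp. apply OK_Not, OK_Ex1, OK_Lt; lia.
      apply OK_MAndL; intros f Hf; apply in_map_iff in Hf; destruct Hf as [v [<- Hv]].
      apply OK_MImp. apply OK_letterF; lia. apply OK_In. lia.
      apply (idx_spec _ (dl_in A _ _ (q0_in A))).
    + apply OK_MAndL; intros f Hf; apply in_map_iff in Hf; destruct Hf as [j [<- Hj]].
      apply OK_MAndL; intros f Hf; apply in_map_iff in Hf; destruct Hf as [v [<- Hv]].
      apply OK_MImp. apply OK_And. apply OK_Ex1, OK_And. apply OK_And. apply OK_Lt; lia.
      apply OK_Not, OK_Ex1, OK_And; apply OK_Lt; lia. apply OK_In; apply in_seq in Hj; lia.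
      apply OK_letterF; lia. apply OK_In. lia. apply idx_spec, dl_in, nth_In. apply in_seq in Hj; lia.
  - apply OK_MOr. apply OK_And. apply OK_Not, OK_Ex1, OK_Tru.
    destruct (pb _); [apply OK_Tru | apply OK_Fls].
    apply OK_Ex1, OK_And. apply OK_Not, OK_Ex1, OK_Lt; lia.
    apply OK_MOrL; intros f Hf; apply in_map_iff in Hf; destruct Hf as [j [<- Hj]].
    apply in_seq in Hj. destruct (pb _). apply OK_In; lia. apply OK_Fls.
Qed.

Section SEMPSI.
Variable w : list (list Sigma).
Let L := conv_len w.
Variable E : nat -> nat -> Prop.
Hypothesis HEk : forall i p, k <= i -> ~ E i p.
Hypothesis HEal : forall i e1 e2 x, i < k -> (MS w e1 e2 (al i x) <-> E i (e1 x)).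

Lemma letter_sem v e1 e2 x : length v = k ->
  (MS w e1 e2 (letterF v x) <-> lv v = col E (e1 x)).
Proof.
  intros Hv. unfold letterF. rewrite MAndL_sem. split.
  - intros H. apply functional_extensionality; intros i. unfold lv, col.
    destruct (Nat.lt_ge_cases i k) as [Hi|Hi].
    + assert (Hin : In i (seq 0 k)) by (apply in_seq; lia).
      pose proof (H _ (in_map (fun i => lit i (nth i v false) x) _ _ Hin)) as Hf. simpl in Hf.
      unfold lit in Hf. destruct (nth i v false).
      * symmetry; apply pbI. exact (proj1 (HEal i e1 e2 x Hi) Hf).
      * symmetry; apply pbN. intros HE. apply Hf. exact (proj2 (HEal i e1 e2 x Hi) HE).
    + rewrite nth_overflow by lia. symmetry; apply pbN. apply HEk; auto.
  - intros H f Hf. apply in_map_iff in Hf. destruct Hf as [i [<- Hi]]. apply in_seq in Hi.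
    assert (Hb : nth i v false = pb (E i (e1 x))) by (apply (f_equal (fun g => g i)) in H; exact H).
    unfold lit. rewrite Hb. destruct (pb (E i (e1 x))) eqn:EB.
    + apply (proj2 (HEal i e1 e2 x ltac:(lia))). apply pbT; auto.
    + intros Hal. apply (proj1 (HEal i e1 e2 x ltac:(lia))) in Hal. apply pbFN in EB; auto.
Qed.

Definition vp (p : nat) := map (fun i => pb (E i p)) (seq 0 k).
Lemma vp_av p : In (vp p) (av k).
Proof. apply av_spec. unfold vp; rewrite length_map, length_seq; auto. Qed.
Lemma vp_len p : length (vp p) = k.
Proof. unfold vp; rewrite length_map, length_seq; auto. Qed.
Lemma lv_vp p : lv (vp p) = col E p.
Proof.
  apply functional_extensionality; intros i. unfold lv, vp, col.
  destruct (Nat.lt_ge_cases i k) as [Hi|Hi].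
  - rewrite nth_map_seq; auto.
  - rewrite nth_overflow by (rewrite length_map, length_seq; lia). symmetry; apply pbN; apply HEk; auto.
Qed.

Lemma First_sem e1 e2 x : e1 x < L -> (MS w e1 e2 (First x) <-> e1 x = 0).
Proof.
  intros H. unfold First. simpl. split.
  - intros H'. destruct (e1 x) eqn:E1; auto. exfalso; apply H'. exists 0; split; [lia|]. simpl; lia.
  - intros E1 [q [_ Hq]]. simpl in Hq. lia.
Qed.

Lemma Last_sem e1 e2 x : e1 x < L -> (MS w e1 e2 (Last x) <-> S (e1 x) = L).
Proof.
  intros H. unfold Last. simpl. split.
  - intros H'. destruct (Nat.eq_dec (S (e1 x)) L); auto. exfalso; apply H'. exists (S (e1 x)); split; [lia|]. simpl; lia.
  - intros E1 [q [Hq1 Hq]]. simpl in Hq. lia.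
Qed.

Lemma PrevIn_sem j p e1 e2 : p < L -> (MS w (scons p e1) e2 (PrevIn j) <-> exists y, S y = p /\ e2 j y).
Proof.
  intros Hp. unfold PrevIn, Succ. simpl. split.
  - intros [y [Hy [[H1 H2] H3]]]. exists y; split; auto.
    destruct (Nat.eq_dec (S y) p); auto. exfalso; apply H2. exists (S y); simpl; split; [lia|]. split; lia.
  - intros [y [<- Hy]]. exists y; split; [lia|]. split; auto. split; [lia|].
    intros [z [_ [H1 H2]]]. simpl in H1, H2. lia.
Qed.

Let c := col E.
Let st p := runfrom A (q0 A) c (S p).
Lemma st_in p : In (st p) (en A).
Proof. apply runfrom_in, q0_in. Qed.

Definition envX (Xs : nat -> nat -> Prop) (e2 : nat -> nat -> Prop) :=
  fun j => if j <? Nq then Xs j else e2 (j - Nq).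
Lemma envX_lt Xs e2 j : j < Nq -> envX Xs e2 j = Xs j.
Proof. intros H; unfold envX. destruct (Nat.ltb_spec j Nq); auto; lia. Qed.

Lemma MIn_envX e1 Xs e2 x j : j < Nq -> (MS w e1 (envX Xs e2) (MIn x j) <-> Xs j (e1 x)).
Proof. intros H. simpl. rewrite envX_lt; tauto. Qed.

Lemma Cons_sem e1 Xs e2 : MS w e1 (envX Xs e2) Cons <->
  forall p, p < L ->
   (forall i j, i < Nq -> j < Nq -> i <> j -> ~ (Xs i p /\ Xs j p)) /\
   (p = 0 -> forall v, In v (av k) -> lv v = c p -> Xs (idx (dl A (q0 A) (lv v))) p) /\
   (forall j v, j < Nq -> In v (av k) -> (exists y, S y = p /\ Xs j y) -> lv v = c p ->
      Xs (idx (dl A (eN j) (lv v))) p).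
Proof.
  assert (Hi0 : forall v, idx (dl A (q0 A) v) < Nq) by (intros; apply idx_spec, dl_in, q0_in).
  assert (HiN : forall j v, j < Nq -> idx (dl A (eN j) v) < Nq) by (intros; apply idx_spec, dl_in, nth_In; auto).
  unfold Cons. rewrite MAll_sem. split.
  - intros H p Hp. specialize (H p Hp). destruct H as [HU [HI HT]]. split; [|split].
    + intros i j Hi Hj Hij. unfold Uniq in HU. rewrite MAndL_sem in HU.
      specialize (HU (MAndL (map (fun j => if Nat.eqb i j then Tru else MNot (MAnd (MIn 0 i) (MIn 0 j))) (seq 0 Nq)))
        ltac:(apply in_map_iff; exists i; split; auto; apply in_seq; lia)).
      rewrite MAndL_sem in HU.
      specialize (HU (if Nat.eqb i j then Tru else MNot (MAnd (MIn 0 i) (MIn 0 j)))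
        ltac:(apply in_map_iff; exists j; split; auto; apply in_seq; lia)).
      destruct (Nat.eqb_spec i j); try contradiction. simpl in HU. rewrite !envX_lt in HU by auto. exact HU.
    + intros Hp0 v Hv Hl. unfold Init in HI. rewrite MImp_sem in HI. rewrite First_sem in HI by (simpl; auto).
      specialize (HI Hp0). rewrite MAndL_sem in HI.
      specialize (HI _ ltac:(apply in_map_iff; exists v; split; [reflexivity|auto])).
      rewrite MImp_sem, MIn_envX in HI by auto. apply HI.
      apply letter_sem; [apply av_spec; auto|auto].
    + intros j v Hj Hv Hy Hl. unfold Trans in HT. rewrite MAndL_sem in HT.
      specialize (HT _ ltac:(apply in_map_iff; exists j; split; [reflexivity|apply in_seq; lia])).
      rewrite MAndL_sem in HT.
      specialize (HT _ ltac:(apply in_map_iff; exists v; split; [reflexivity|auto])).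
      rewrite MImp_sem, MIn_envX in HT by auto. apply HT. split.
      * apply PrevIn_sem; auto. rewrite envX_lt; auto.
      * apply letter_sem; [apply av_spec; auto|auto].
  - intros H p Hp. specialize (H p Hp). destruct H as [HU [HI HT]]. split; [|split].
    + unfold Uniq. rewrite MAndL_sem. intros f Hf. apply in_map_iff in Hf. destruct Hf as [i [<- Hi]].
      rewrite MAndL_sem. intros f Hf. apply in_map_iff in Hf. destruct Hf as [j [<- Hj]].
      apply in_seq in Hi, Hj. destruct (Nat.eqb_spec i j). apply Tru_sem; auto.
      simpl. rewrite !envX_lt by lia. apply HU; lia.
    + unfold Init. rewrite MImp_sem. rewrite First_sem by (simpl; auto). intros Hp0.
      rewrite MAndL_sem. intros f Hf. apply in_map_iff in Hf. destruct Hf as [v [<- Hv]].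
      rewrite MImp_sem. intros Hl. apply letter_sem in Hl; [|apply av_spec; auto].
      rewrite MIn_envX by auto. apply HI; auto.
    + unfold Trans. rewrite MAndL_sem. intros f Hf. apply in_map_iff in Hf. destruct Hf as [j [<- Hj]].
      apply in_seq in Hj. assert (Hj' : j < Nq) by lia. rewrite MAndL_sem. intros f Hf. apply in_map_iff in Hf. destruct Hf as [v [<- Hv]].
      rewrite MImp_sem. intros [Hprev Hl]. apply letter_sem in Hl; [|apply av_spec; auto].
      apply PrevIn_sem in Hprev; auto. rewrite MIn_envX by auto. apply HT; auto; try lia.
      destruct Hprev as [y [Hy Hy2]]. exists y; split; auto. rewrite envX_lt in Hy2; auto; lia.
Qed.

Lemma FinF_sem e1 Xs e2 : MS w e1 (envX Xs e2) FinF <->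
  (L = 0 /\ fin A (q0 A)) \/
  (exists p, S p = L /\ exists j, j < Nq /\ fin A (eN j) /\ Xs j p).
Proof.
  unfold FinF. rewrite MOr_sem, MAnd_sem, MNot_sem, MEx1_sem, MEx1_sem.
  assert (Hc : MS w e1 (envX Xs e2) (if pb (fin A (q0 A)) then Tru else Fls) <-> fin A (q0 A)).
  { destruct (pb (fin A (q0 A))) eqn:EF; [rewrite Tru_sem; apply pbT in EF|rewrite Fls_sem; apply pbFN in EF]; tauto. }
  rewrite Hc.
  assert (HL0 : (~ exists p, p < conv_len w /\ MS w (scons p e1) (envX Xs e2) Tru) <-> L = 0).
  { split. intros H. destruct (Nat.eq_dec L 0); auto. exfalso; apply H. exists 0; split; [lia|]. apply Tru_sem; auto.
    intros H [p [Hp _]]. lia. }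
  rewrite HL0.
  assert (Hr : (exists p, p < conv_len w /\ MS w (scons p e1) (envX Xs e2) (MAnd (Last 0)
     (MOrL (map (fun j => if pb (fin A (eN j)) then MIn 0 j else Fls) (seq 0 Nq))))) <->
     (exists p, S p = L /\ exists j, j < Nq /\ fin A (eN j) /\ Xs j p)).
  { split.
    - intros [p [Hp H]]. rewrite MAnd_sem in H. destruct H as [H1 H2].
      apply (Last_sem (scons p e1) _ 0 Hp) in H1. simpl in H1.
      rewrite MOrL_sem in H2. destruct H2 as [f [Hf H2]]. apply in_map_iff in Hf.
      destruct Hf as [j [<- Hj]]. apply in_seq in Hj.
      exists p; split; auto. exists j; split; [lia|].
      destruct (pb (fin A (eN j))) eqn:EF.
      + apply pbT in EF. split; auto. apply MIn_envX in H2; [|lia]. exact H2.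
      + apply Fls_sem in H2; contradiction.
    - intros [p [Hp [j [Hj [Hf HX]]]]]. exists p; split; [lia|]. rewrite MAnd_sem; split.
      + apply (Last_sem (scons p e1) _ 0); simpl; auto; lia.
      + rewrite MOrL_sem. exists (MIn 0 j). split.
        * apply in_map_iff. exists j. split. rewrite (pbI _ Hf); auto. apply in_seq; lia.
        * apply MIn_envX; auto. }
  rewrite Hr. reflexivity.
Qed.

Lemma st0 : st 0 = dl A (q0 A) (c 0).
Proof. reflexivity. Qed.
Lemma stS p : st (S p) = dl A (st p) (c (S p)).
Proof. reflexivity. Qed.

Theorem Psi_sem e1 e2 : MS w e1 e2 Psi <-> fin A (run A c L).
Proof.
  unfold Psi. rewrite exN_sem. split.
  - intros [Xs [HXs H]]. change (fun j => if j <? Nq then Xs j else e2 (j - Nq)) with (envX Xs e2) in H.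
    rewrite MAnd_sem, Cons_sem, FinF_sem in H. destruct H as [HC HF].
    assert (Hst : forall p, p < L -> forall j, j < Nq -> (Xs j p <-> j = idx (st p))).
    { assert (Hu : forall p j, p < L -> j < Nq -> Xs (idx (st p)) p -> (Xs j p <-> j = idx (st p))).
      { intros p j Hp Hj HX. split; [|intros ->; auto]. intros HXj.
        destruct (Nat.eq_dec j (idx (st p))); auto. exfalso.
        apply (proj1 (HC p Hp) j (idx (st p))); auto. apply idx_spec, st_in. }
      induction p; intros Hp j Hj; apply Hu; auto.
      - destruct (HC 0 Hp) as [_ [HI _]]. replace (st 0) with (dl A (q0 A) (lv (vp 0))) by (rewrite lv_vp; reflexivity). apply HI; auto. apply vp_av.
        apply lv_vp.
      - assert (IH : Xs (idx (st p)) p) by (apply IHp; [lia| apply idx_spec, st_in | reflexivity]).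
        destruct (HC (S p) Hp) as [_ [_ HT]].
        destruct (idx_spec _ (st_in p)) as [Hi1 Hi2].
        replace (st (S p)) with (dl A (eN (idx (st p))) (lv (vp (S p)))) by (rewrite lv_vp, Hi2; reflexivity). apply HT; auto. apply vp_av.
        exists p; split; auto. apply lv_vp. }
    destruct HF as [[HL Hf]|[p [Hp [j [Hj [Hf HX]]]]]].
    + unfold run. rewrite HL. exact Hf.
    + apply (Hst p ltac:(lia) j Hj) in HX. subst j. destruct (idx_spec _ (st_in p)) as [_ Hi2].
      rewrite Hi2 in Hf. unfold run. rewrite <- Hp. exact Hf.
  - intros Hf. exists (fun j p => p < L /\ j = idx (st p)). split.
    + intros j p _ [H _]; exact H.
    + change (fun j => if j <? Nq then _ else e2 (j - Nq)) with (envX (fun j p => p < L /\ j = idx (st p)) e2).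
      rewrite MAnd_sem, Cons_sem, FinF_sem. split.
      * intros p Hp. split; [|split].
        -- intros i j _ _ Hij [[_ H1] [_ H2]]. congruence.
        -- intros -> v _ Hl. split; auto. rewrite Hl, st0. reflexivity.
        -- intros j v Hj _ [y [Hy [_ HX]]] Hl. split; auto.
           destruct (idx_spec _ (st_in y)) as [_ Hi2]. rewrite HX, Hi2, Hl, <- Hy, stS. reflexivity.
      * destruct (Nat.eq_dec L 0) as [HL|HL].
        -- left. split; auto. unfold run in Hf. rewrite HL in Hf. exact Hf.
        -- right. exists (L - 1). split; [lia|]. exists (idx (st (L - 1))).
           destruct (idx_spec _ (st_in (L - 1))) as [Hi1 Hi2]. split; auto. split; [|split; auto; lia].
           rewrite Hi2. unfold st. replace (S (L - 1)) with L by lia. exact Hf.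
Qed.
End SEMPSI.
End PSI.

Section WORDS.
Variable Sigma : Type.

Lemma conv_letter_nth (w : list (list Sigma)) j p :
  conv_letter w j p = nth j (map (@mu Sigma) w) (fun _ => None) p.
Proof.
  revert j; induction w as [|a w IH]; intros j.
  - unfold conv_letter; destruct j; reflexivity.
  - destruct j; [reflexivity|]. apply IH.
Qed.

Lemma env_eq (w : list (list Sigma)) p :
  (fun j => nth j (map (@mu Sigma) w) (fun _ => None) p) = (fun j => conv_letter w j p).
Proof. apply functional_extensionality; intros j; symmetry; apply conv_letter_nth. Qed.

Lemma conv_len_ge (w : list (list Sigma)) j wi : nth_error w j = Some wi -> length wi <= conv_len w.
Proof.
  revert j; induction w as [|a w IH]; intros j H; [destruct j; discriminate|].
  destruct j; simpl in H. injection H as <-. simpl; lia. apply IH in H. simpl; lia.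
Qed.

Lemma conv_letter_beyond (w : list (list Sigma)) j p : conv_len w <= p -> conv_letter w j p = None.
Proof.
  intros H. unfold conv_letter. destruct (nth_error w j) eqn:E; auto.
  apply conv_len_ge in E. apply nth_error_None. lia.
Qed.

Lemma conv_len_lt (w : list (list Sigma)) p : p < conv_len w <-> exists j, conv_letter w j p <> None.
Proof.
  split.
  - induction w as [|a w IH]; simpl; intros H; [lia|].
    destruct (Nat.lt_ge_cases p (length a)).
    + exists 0. unfold conv_letter; simpl. intros E. apply nth_error_None in E; lia.
    + destruct IH as [j Hj]. lia. exists (S j). exact Hj.
  - intros [j Hj]. destruct (Nat.lt_ge_cases p (conv_len w)); auto.
    exfalso; apply Hj, conv_letter_beyond; auto.
Qed.

Lemma mu_inj (a b : list Sigma) : mu a = mu b -> a = b.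
Proof. intros H. apply nth_error_ext. intros i. exact (f_equal (fun f => f i) H). Qed.

Lemma map_mu_inj (w w' : list (list Sigma)) : map (@mu Sigma) w = map (@mu Sigma) w' -> w = w'.
Proof.
  revert w'; induction w; intros [|b w'] H; simpl in H; try discriminate; auto.
  injection H as H1 H2. f_equal; auto. apply mu_inj; auto.
Qed.

Lemma mu_rel_map (R : list (list Sigma) -> Prop) w : R w <-> mu_rel R (map (@mu Sigma) w).
Proof.
  split. intros H; exists w; auto.
  intros [w' [H E]]. apply map_mu_inj in E. subst; auto.
Qed.

Lemma in_W_mu (u : list Sigma) : in_W (mu u).
Proof. exists (length u). intros i Hi. apply nth_error_None; auto. Qed.

Lemma Forall_in_W_map (w : list (list Sigma)) : Forall (@in_W Sigma) (map (@mu Sigma) w).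
Proof. apply Forall_forall. intros f Hf. apply in_map_iff in Hf. destruct Hf as [u [<- _]]. apply in_W_mu. Qed.
End WORDS.

Lemma red_to_mso (Sym : Type) (ar : Sym -> nat) (Sigma : Type)
  (rel : Sym -> list Sigma -> Prop) (n : nat) (R : list (list Sigma) -> Prop) :
  1 <= n -> (forall w, R w -> length w = n) ->
  admits_reduction_sequence ar rel n (mu_rel R) -> MSO_definable ar rel n R.
Proof.
  intros Hn HR [G [thetas [HG [Hth Heq]]]].
  rewrite Forall_forall in Hth.
  set (A := autof G).
  exists (Psi Sym thetas A).
  destruct (OK_Psi Sym n thetas A Hn ltac:(intros th H; apply Hth; auto)) as [H1 [H2 H3]].
  split; [auto|split; [lia|split; [lia|]]].
  intros w Hw.
  set (E := theta_set ar rel thetas (map (@mu Sigma) w)).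
  rewrite mu_rel_map, Heq by (rewrite ?length_map; auto using Forall_in_W_map).
  fold E. rewrite (autof_good G E (conv_len w)).
  - symmetry. apply (Psi_sem Sym ar Sigma rel n thetas A Hn w E).
    + intros i p Hi. unfold E, theta_set. replace (nth_error thetas i) with (@None (hform Sym)); auto.
      symmetry; apply nth_error_None; auto.
    + intros i e1 e2 x Hi. unfold al, E, theta_set. simpl.
      rewrite (nth_error_nth' thetas (HEq 0 0) Hi). rewrite env_eq. tauto.
  - intros i p. unfold E, theta_set. destruct (nth_error thetas i) as [th|] eqn:Eth; [|tauto].
    intros Hs. destruct (Nat.lt_ge_cases p (conv_len w)) as [|Hp]; auto. exfalso.
    apply (proj2 (Hth th ltac:(eapply nth_error_In; eauto))).
    rewrite env_eq in Hs. replace (fun _ : nat => @None Sigma) with (fun j => conv_letter w j p); auto.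
    apply functional_extensionality; intros j; apply conv_letter_beyond; auto.
Qed.

Definition SOr (f g : sform) : sform := SNot (SAnd (SNot f) (SNot g)).
Definition Sing (a : nat) : sform := SEx (SOr (SLL (S a) 0) (SLL 0 (S a))).
Definition DC (a : nat) : sform :=
  SNot (SEx (SEx (SAnd (SLL 1 0) (SAnd (SSub 0 (S (S a))) (SNot (SSub 1 (S (S a)))))))).
Definition STru : sform := SEq 0 0.
Definition SAndL (fs : list sform) : sform := fold_right SAnd STru fs.

Lemma Sing_sem E a : ssat E (Sing a) <-> exists m, forall j, E a j <-> j = m.
Proof.
  simpl. split.
  - intros [Y [_ H]]. apply NNPP; intros Hn. apply H. split; intros [m [k [Hmk [H1 H2]]]]; apply Hn.
    + exists m; exact H1.
    + exists k; exact H2.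
  - intros [m Hm]. exists (fun j => j = S m). split. exists (S (S m)); intros k ->; lia.
    intros [H1 _]. apply H1. exists m, (S m). split; [lia|split; auto]. intros; tauto.
Qed.

Lemma DC_sem E a : ssat E (DC a) <-> forall m k, m < k -> E a k -> E a m.
Proof.
  simpl. split.
  - intros H m k Hmk Hk. apply NNPP; intros Hm. apply H.
    exists (fun j => j = m). split. exists (S m); intros; lia.
    exists (fun j => j = k). split. exists (S k); intros; lia.
    split. exists m, k; split; auto. split; intros j; simpl; tauto.
    split. intros j ->; auto. intros H'. apply Hm, H'; auto.
  - intros H [Y1 [_ [Y0 [_ [[m [k [Hmk [H1 H2]]]] [H3 H4]]]]]].
    apply H4. intros j Hj. simpl in *. apply H1 in Hj; subst j.
    apply (H m k Hmk). apply H3. apply H2; auto.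
Qed.

Lemma SAndL_sem E fs : ssat E (SAndL fs) <-> forall f, In f fs -> ssat E f.
Proof.
  induction fs; simpl. split; [tauto|]. intros _ k; tauto.
  rewrite IHfs. split. intros [H1 H2] f [<-|Hf]; auto. intros H; split; auto.
Qed.

Lemma sfvb_SAndL fs B : 1 <= B -> (forall f, In f fs -> sfvb f <= B) -> sfvb (SAndL fs) <= B.
Proof.
  induction fs; simpl; intros H1 H2. lia.
  assert (sfvb a <= B) by auto. assert (sfvb (SAndL fs) <= B) by auto. lia.
Qed.

Fixpoint alphas {Sym} (f : mso Sym) : list (hform Sym) :=
  match f with
  | MAlpha F _ => [F]
  | MNot g | MEx1 g | MEx2 g => alphas g
  | MAnd g h => alphas g ++ alphas h
  | _ => []
  end.

Fixpoint tr {Sym} (n : nat) (r1 r2 : nat -> nat) (t c : nat) (f : mso Sym) : sform :=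
  match f with
  | MLt x y => SLL (r1 x) (r1 y)
  | MEq x y => SEq (r1 x) (r1 y)
  | MIn x X => SSub (r1 x) (r2 X)
  | MAlpha _ x => SSub (r1 x) (t + S n + c)
  | MNot g => SNot (tr n r1 r2 t c g)
  | MAnd g h => SAnd (tr n r1 r2 t c g) (tr n r1 r2 t (c + length (alphas g)) h)
  | MEx1 g => SEx (SAnd (SAnd (Sing 0) (SSub 0 (S t)))
                 (tr n (scons 0 (fun x => S (r1 x))) (fun X => S (r2 X)) (S t) c g))
  | MEx2 g => SEx (SAnd (SSub 0 (S t))
                 (tr n (fun x => S (r1 x)) (scons 0 (fun X => S (r2 X))) (S t) c g))
  end.

Lemma tr_bound {Sym} n (f : mso Sym) : forall r1 r2 t c B,
  (forall x, x < mfv1 f -> r1 x < B) -> (forall X, X < mfv2 f -> r2 X < B) ->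
  t < B -> t + S n + c + length (alphas f) <= B -> sfvb (tr n r1 r2 t c f) <= B.
Proof.
  induction f; intros r1 r2 t c B H1 H2 Ht Hc; simpl in *.
  - assert (r1 x < B) by (apply H1; lia). assert (r1 y < B) by (apply H1; lia). lia.
  - assert (r1 x < B) by (apply H1; lia). assert (r1 y < B) by (apply H1; lia). lia.
  - assert (r1 x < B) by (apply H1; lia). assert (r2 X < B) by (apply H2; lia). lia.
  - assert (r1 x < B) by (apply H1; lia). lia.
  - apply IHf; auto.
  - rewrite length_app in Hc.
    assert (sfvb (tr n r1 r2 t c f1) <= B) by (apply IHf1; auto; try (intros; apply H1; lia); try (intros; apply H2; lia); lia).
    assert (sfvb (tr n r1 r2 t (c + length (alphas f1)) f2) <= B) by (apply IHf2; auto; try (intros; apply H1; lia); try (intros; apply H2; lia); lia).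
    lia.
  - assert (sfvb (tr n (scons 0 (fun x => S (r1 x))) (fun X => S (r2 X)) (S t) c f) <= S B).
    { apply IHf; try lia. intros [|x] Hx; simpl. lia. assert (r1 x < B) by (apply H1; lia). lia.
      intros X HX. assert (r2 X < B) by (apply H2; lia). lia. }
    set (s := sfvb (tr n (scons 0 (fun x => S (r1 x))) (fun X => S (r2 X)) (S t) c f)) in *.
    change (Nat.pred (Nat.max (Nat.max 1 (Nat.max 1 (S (S t)))) s) <= B). lia.
  - assert (sfvb (tr n (fun x => S (r1 x)) (scons 0 (fun X => S (r2 X))) (S t) c f) <= S B).
    { apply IHf; try lia. intros x Hx. assert (r1 x < B) by (apply H1; lia). lia.
      intros [|X] HX; simpl. lia. assert (r2 X < B) by (apply H2; lia). lia. }
    set (s := sfvb (tr n (fun x => S (r1 x)) (scons 0 (fun X => S (r2 X))) (S t) c f)) in *.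
    change (Nat.pred (Nat.max (Nat.max 1 (S (S t))) s) <= B). lia.
Qed.

Lemma alphas_wf {Sym} n (f : mso Sym) : mso_wf n f -> forall G, In G (alphas f) -> 0 < hfvb G <= n.
Proof.
  induction f; simpl; intros H G HF; try contradiction.
  - destruct HF as [<-|[]]; auto.
  - auto.
  - apply in_app_iff in HF; destruct H; destruct HF; auto.
  - auto.
  - auto.
Qed.

Section TRSEM.
Variable Sym : Type.
Variable ar : Sym -> nat.
Variable Sigma : Type.
Variable rel : Sym -> list Sigma -> Prop.
Variable n : nat.
Variable w : list (list Sigma).
Local Notation MS := (msat ar rel).

Lemma tr_sem (f : mso Sym) : forall r1 r2 t c E e1 e2,
  (forall p, E t p <-> p < conv_len w) ->
  (forall i p, i < length (alphas f) -> p < conv_len w ->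
     (E (t + S n + c + i) p <-> hsat ar rel (fun j => conv_letter w j p) (nth i (alphas f) (HEq 0 0)))) ->
  (forall x, x < mfv1 f -> (forall k, E (r1 x) k <-> k = e1 x) /\ e1 x < conv_len w) ->
  (forall X, X < mfv2 f -> forall k, E (r2 X) k <-> e2 X k) ->
  (ssat E (tr n r1 r2 t c f) <-> MS w e1 e2 f).
Proof.
  induction f; intros r1 r2 t c E e1 e2 HD HA H1 H2; simpl in *.
  - destruct (H1 x ltac:(lia)) as [Hx _]. destruct (H1 y ltac:(lia)) as [Hy _]. split.
    + intros [m [k [Hmk [A1 A2]]]]. assert (m = e1 x) by (apply Hx, A1; auto).
      assert (k = e1 y) by (apply Hy, A2; auto). lia.
    + intros Hlt. exists (e1 x), (e1 y). split; [auto|split]; intros j; [rewrite Hx|rewrite Hy]; tauto.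
  - destruct (H1 x ltac:(lia)) as [Hx _]. destruct (H1 y ltac:(lia)) as [Hy _]. split.
    + intros H. apply Hy, H, Hx; auto.
    + intros Heq k. rewrite Hx, Hy, Heq; tauto.
  - destruct (H1 x ltac:(lia)) as [Hx _]. split.
    + intros H. apply H2; [lia|]. apply H, Hx; auto.
    + intros H k Hk. apply Hx in Hk; subst k. apply H2; auto; lia.
  - destruct (H1 x ltac:(lia)) as [Hx Hl]. specialize (HA 0 (e1 x) ltac:(lia) Hl).
    rewrite Nat.add_0_r in HA. simpl in HA. split.
    + intros H. apply HA, H, Hx; auto.
    + intros H k Hk. apply Hx in Hk; subst k. apply HA; auto.
  - rewrite IHf; auto. tauto.
  - rewrite length_app in HA.
    rewrite (IHf1 r1 r2 t c E e1 e2), (IHf2 r1 r2 t (c + length (alphas f1)) E e1 e2); [tauto| | | | | | | |].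
    + auto.
    + intros i p Hi Hp. replace (t + S n + (c + length (alphas f1)) + i) with (t + S n + c + (length (alphas f1) + i)) by lia.
      rewrite HA by (auto; lia). rewrite app_nth2 by lia. replace (length (alphas f1) + i - length (alphas f1)) with i by lia. tauto.
    + intros x Hx; apply H1; lia.
    + intros X HX; apply H2; lia.
    + auto.
    + intros i p Hi Hp. rewrite HA by (auto; lia). rewrite app_nth1 by lia. tauto.
    + intros x Hx; apply H1; lia.
    + intros X HX; apply H2; lia.
  - split.
    + intros [Y [_ [[HS Hsub] Hg]]]. apply (proj1 (Sing_sem (scons Y E) 0)) in HS. destruct HS as [m Hm]. simpl in Hm.
      assert (Hml : m < conv_len w) by (apply HD, Hsub, Hm; auto).
      assert (H1' : forall x, x < mfv1 f -> (forall k, scons Y E (scons 0 (fun x => S (r1 x)) x) k <-> k = scons m e1 x) /\ scons m e1 x < conv_len w).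
      { intros [|x] Hx; simpl. split; auto. apply H1; lia. }
      exists m. split; auto.
      exact (proj1 (IHf (scons 0 (fun x => S (r1 x))) (fun X => S (r2 X)) (S t) c (scons Y E) (scons m e1) e2 HD HA H1' H2) Hg).
    + intros [p [Hp Hg]]. exists (fun j => j = p). split. exists (S p); intros; lia.
      split. split. apply (proj2 (Sing_sem (scons (fun j => j = p) E) 0)). exists p. simpl. tauto. simpl. intros k ->; apply HD; auto.
      apply (IHf (scons 0 (fun x => S (r1 x))) (fun X => S (r2 X)) (S t) c (scons (fun j => j = p) E) (scons p e1) e2 HD HA); auto.
      intros [|x] Hx; simpl. split; auto; tauto. apply H1; lia.
  - split.
    + intros [Y [_ [Hsub Hg]]]. exists Y. split. intros p Hp; apply HD, Hsub; auto.
      assert (H2' : forall X, X < mfv2 f -> forall k, scons Y E (scons 0 (fun X => S (r2 X)) X) k <-> scons Y e2 X k).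
      { intros [|X] HX k; simpl. tauto. apply H2; lia. }
      exact (proj1 (IHf (fun x => S (r1 x)) (scons 0 (fun X => S (r2 X))) (S t) c (scons Y E) e1 (scons Y e2) HD HA H1 H2') Hg).
    + intros [X [HX Hg]]. exists X. split. exists (conv_len w); auto. split. intros k Hk; apply HD, HX; auto.
      apply (IHf (fun x => S (r1 x)) (scons 0 (fun X => S (r2 X))) (S t) c (scons X E) e1 (scons X e2) HD HA H1); auto.
      intros [|Y] HY k; simpl. tauto. apply H2; lia.
Qed.
End TRSEM.

Fixpoint allh {Sym} (m : nat) : hform Sym :=
  match m with 0 => HEq 0 0 | S m' => HAnd (HHash m') (allh m') end.

Lemma allh_sem {Sym} (ar : Sym -> nat) {Sigma} (rel : Sym -> list Sigma -> Prop) e m :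
  hsat ar rel e (allh m) <-> forall i, i < m -> e i = None.
Proof.
  induction m; simpl. split; intros; auto; lia.
  rewrite IHm. split. intros [H1 H2] i Hi. destruct (Nat.eq_dec i m). subst; auto. apply H2; lia.
  intros H; split; auto.
Qed.

Lemma hfvb_allh {Sym} m : hfvb (@allh Sym m) = Nat.max m 1.
Proof. induction m; [reflexivity|]. cbn [allh hfvb]. rewrite IHm. lia. Qed.

Lemma downclosed_mu {Sigma} (f : nat -> option Sigma) : in_W f ->
  (forall m k, m < k -> f k <> None -> f m <> None) -> exists u, f = mu u.
Proof.
  intros [M HM]. revert f HM. induction M; intros f HM Hd.
  - exists []. apply functional_extensionality; intros i. rewrite HM by lia. destruct i; reflexivity.
  - destruct (f 0) as [a|] eqn:F0.
    + destruct (IHM (fun i => f (S i))) as [u Hu].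
      * intros i Hi; apply HM; lia.
      * intros m k Hmk; apply Hd; lia.
      * exists (a :: u). apply functional_extensionality; intros [|i]; simpl; auto.
        exact (f_equal (fun g => g i) Hu).
    + exists []. apply functional_extensionality; intros i. destruct i; simpl; auto.
      destruct (f (S i)) eqn:E; auto. exfalso. apply (Hd 0 (S i)); [lia| congruence | auto].
Qed.

Lemma list_mu {Sigma} (fs : list (nat -> option Sigma)) :
  Forall (fun f => exists u, f = mu u) fs -> exists w, fs = map (@mu Sigma) w.
Proof.
  induction 1. exists []; auto. destruct H as [u ->]. destruct IHForall as [w ->]. exists (u :: w); auto.
Qed.

Section RED.
Variable Sym : Type.
Variable ar : Sym -> nat.
Variable Sigma : Type.
Variable rel : Sym -> list Sigma -> Prop.
Variable n : nat.
Variable psi : mso Sym.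

Definition Dth : hform Sym := HNot (allh n).
Definition hl : list (hform Sym) := map (fun i => HNot (HHash i)) (seq 0 n).
Definition alth : list (hform Sym) := map (fun F => HAnd F Dth) (alphas psi).
Definition thetasOf : list (hform Sym) := Dth :: (hl ++ alth).
Definition Checks : sform := SAndL (map (fun i => DC (S i)) (seq 0 n)).
Definition Gof : sform := SAnd Checks (tr n (fun _ => 0) (fun _ => 0) 0 0 psi).

Section TS.
Variable fs : list (nat -> option Sigma).
Let envf p := fun j => nth j fs (fun _ => None) p.
Let E := theta_set ar rel thetasOf fs.

Lemma ts0 p : E 0 p <-> ~ (forall i, i < n -> envf p i = None).
Proof. unfold E, theta_set; simpl. rewrite allh_sem. reflexivity. Qed.

Lemma tsH i p : i < n -> (E (S i) p <-> envf p i <> None).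
Proof.
  intros Hi. unfold E, theta_set, thetasOf. simpl.
  rewrite nth_error_app1 by (unfold hl; rewrite length_map, length_seq; auto).
  unfold hl. rewrite nth_error_map, nth_error_seq.
  destruct (Nat.ltb_spec i n); [|lia]. simpl. reflexivity.
Qed.

Lemma tsA c p : c < length (alphas psi) ->
  (E (S n + c) p <-> hsat ar rel (envf p) (nth c (alphas psi) (HEq 0 0)) /\ ~ (forall i, i < n -> envf p i = None)).
Proof.
  intros Hc. unfold E, theta_set, thetasOf. simpl.
  rewrite nth_error_app2 by (unfold hl; rewrite length_map, length_seq; lia).
  unfold hl, alth. rewrite length_map, length_seq. replace (n + c - n) with c by lia.
  rewrite nth_error_map, (nth_error_nth' _ (HEq 0 0) Hc). simpl. rewrite allh_sem. reflexivity.
Qed.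
End TS.

Hypothesis Hn : 1 <= n.
Hypothesis Hwf : mso_wf n psi.
Hypothesis Hm1 : mfv1 psi = 0.
Hypothesis Hm2 : mfv2 psi = 0.

Lemma Gof_bound : sfvb Gof <= length thetasOf.
Proof.
  unfold thetasOf. simpl. rewrite length_app. unfold hl, alth. rewrite !length_map, length_seq.
  unfold Gof. simpl. apply Nat.max_lub.
  - apply sfvb_SAndL. lia. intros f Hf. apply in_map_iff in Hf. destruct Hf as [i [<- Hi]].
    apply in_seq in Hi. simpl. lia.
  - apply tr_bound; try lia; intros x Hx; lia.
Qed.

Lemma thetas_ok : Forall (fun th => hfvb th <= n /\ ~ hsat ar rel (fun _ => None) th) thetasOf.
Proof.
  apply Forall_forall. intros th Hth. unfold thetasOf in Hth. destruct Hth as [<-|Hth].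
  - unfold Dth; simpl. rewrite hfvb_allh. split. lia. rewrite allh_sem. intros H; apply H; auto.
  - apply in_app_iff in Hth. destruct Hth as [Hth|Hth]; apply in_map_iff in Hth.
    + destruct Hth as [i [<- Hi]]. apply in_seq in Hi. simpl. split. lia. tauto.
    + destruct Hth as [F [<- HF]]. apply (alphas_wf n psi Hwf) in HF.
      unfold Dth; simpl. rewrite hfvb_allh. split. lia. rewrite allh_sem. intros H; apply H; auto.
Qed.

Section WORD.
Variable w : list (list Sigma).
Hypothesis Hw : length w = n.
Let E := theta_set ar rel thetasOf (map (@mu Sigma) w).

Lemma envf_w p : (fun j => nth j (map (@mu Sigma) w) (fun _ => None) p) = (fun j => conv_letter w j p).
Proof. apply env_eq. Qed.

Lemma D_w p : E 0 p <-> p < conv_len w.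
Proof.
  unfold E. rewrite ts0. setoid_rewrite <- conv_letter_nth. rewrite conv_len_lt. split.
  - intros H. apply NNPP; intros H'. apply H. intros i _. apply NNPP; intros H''. apply H'; eauto.
  - intros [j Hj] H. apply Hj. destruct (Nat.lt_ge_cases j n). apply H; auto.
    unfold conv_letter. replace (nth_error w j) with (@None (list Sigma)); auto.
    symmetry; apply nth_error_None; lia.
Qed.

Lemma checks_w : ssat E Checks.
Proof.
  unfold Checks. apply SAndL_sem. intros f Hf. apply in_map_iff in Hf. destruct Hf as [i [<- Hi]].
  apply in_seq in Hi. apply DC_sem. intros m k Hmk. unfold E. rewrite !tsH by lia.
  rewrite <- !conv_letter_nth. unfold conv_letter. destruct (nth_error w i); auto.
  intros H1 H2. apply H1. apply nth_error_None. apply nth_error_None in H2. lia.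
Qed.

Lemma tr_w : ssat E (tr n (fun _ => 0) (fun _ => 0) 0 0 psi) <-> msat ar rel w (fun _ => 0) (fun _ _ => False) psi.
Proof.
  apply tr_sem.
  - apply D_w.
  - intros i p Hi Hp. replace (0 + S n + 0 + i) with (S n + i) by lia. unfold E. rewrite tsA by auto. rewrite envf_w.
    assert (HD := proj2 (D_w p) Hp). unfold E in HD. rewrite ts0 in HD. tauto.
  - intros x Hx; lia.
  - intros X HX; lia.
Qed.
End WORD.

End RED.

Lemma mso_to_red (Sym : Type) (ar : Sym -> nat) (Sigma : Type)
  (rel : Sym -> list Sigma -> Prop) (n : nat) (R : list (list Sigma) -> Prop) :
  1 <= n -> (forall w, R w -> length w = n) ->
  MSO_definable ar rel n R -> admits_reduction_sequence ar rel n (mu_rel R).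
Proof.
  intros Hn HR [psi [Hwf [Hm1 [Hm2 Hpsi]]]].
  exists (Gof Sym n psi), (thetasOf Sym n psi).
  split; [apply Gof_bound; auto|]. split; [apply thetas_ok; auto|].
  intros fs Hlen HW. split.
  - intros [w [HRw ->]]. pose proof (HR w HRw) as Hw. split.
    + apply checks_w; auto.
    + apply tr_w; auto. apply Hpsi; auto.
  - intros [HC Htr].
    assert (Hex : exists w, fs = map (@mu Sigma) w).
    { apply list_mu. rewrite Forall_forall in HW |- *. intros f Hf. apply downclosed_mu; auto.
      destruct (In_nth fs f (fun _ => None) Hf) as [i [Hi Hfi]].
      unfold Checks in HC. rewrite SAndL_sem in HC.
      assert (Hd := HC (DC (S i)) ltac:(apply (in_map (fun i => DC (S i))); apply in_seq; lia)).
      rewrite DC_sem in Hd. intros m k Hmk Hk.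
      rewrite <- Hfi. apply (proj1 (tsH Sym ar Sigma rel n psi fs i m ltac:(lia))).
      apply (Hd m k Hmk). apply (proj2 (tsH Sym ar Sigma rel n psi fs i k ltac:(lia))). rewrite Hfi; auto. }
    destruct Hex as [w ->]. rewrite length_map in Hlen. exists w. split; auto.
    apply Hpsi; auto. exact (proj1 (tr_w Sym ar Sigma rel n psi Hn Hm1 Hm2 w Hlen) Htr).
Qed.

Theorem proposition4p9 (Sym : Type) (ar : Sym -> nat) (Sigma : Type)
  (rel : Sym -> list Sigma -> Prop) (n : nat) (R : list (list Sigma) -> Prop) :
  1 <= n ->
  (forall w, R w -> length w = n) ->
  (MSO_definable ar rel n R <->
   admits_reduction_sequence ar rel n (mu_rel R)).
Proof.
  intros Hn HR. split.
  - apply mso_to_red; auto.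
  - apply red_to_mso; auto.
Qed.
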